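(* Consider the commutative algebra of Laurent polynomials in nonzero variables $a,b,c,d,e$ with coefficients polynomial in parameters $G_1,G_2$, equipped with the log-canonical Poisson bracket determined by $\{a,b\}=ab$, $\{a,c\}=0$, $\{a,d\}=-\tfrac12 ad$, $\{a,e\}=\tfrac12 ae$, $\{b,c\}=0$, $\{b,d\}=-\tfrac12 bd$, $\{b,e\}=\tfrac12 be$, $\{c,d\}=-\tfrac12 cd$, $\{c,e\}=\tfrac12 ce$, $\{d,e\}=0$, and $\{G_1,\cdot\}=\{G_2,\cdot\}=0$. Then $G_1$, $G_2$ and $de$ are Casimir elements and the generic symplectic leaves are $4$-dimensional. Moreover, the functions $$x_1=-e\frac{a}{c}-d\frac{b}{c},\qquad x_2=-e\frac{b}{c}-G_1 d\frac{b}{a}-d\frac{b^2}{ac}-d\frac{c}{a},\qquad x_3=-G_2\frac{c}{b}-G_1\frac{c}{a}-\frac{b}{a}-\frac{c^2}{ab}-\frac{a}{b}$$ Poisson commute with $e$ and satisfy the cubic relation (the $PV$ monodromy cubic with $G_3=e$, $G_\infty=d$) $$x_1x_2x_3+x_1^2+x_2^2-(G_1G_\infty+G_2G_3)x_1-(G_2G_\infty+G_1G_3)x_2-G_3G_\infty x_3+G_\infty^2+G_3^2+G_1G_2G_3G_\infty=0.$$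
   Context: A log-canonical bracket is extended from the generators to all Laurent polynomials by bilinearity, antisymmetry and the Leibniz rule. Geometrically, $a,b,c,d,e$ are $\lambda$-lengths of a complete system of arcs on a Riemann sphere with three holes and two bordered cusps on one of the holes, and $G_1,G_2$ encode the perimeters of the two holes without cusps; this interpretation is not needed for the claim. *)

(* Defs.v *)
From HB Require Import structures.
From mathcomp Require Import all_boot all_order all_algebra.
From mathcomp Require Import fraction generic_quotient.
From mathcomp.multinomials Require Import mpoly.

Set Implicit Arguments.
Unset Strict Implicit.
Unset Printing Implicit Defensive.

Import GRing.Theory.
Local Open Scope ring_scope.

Section LogCanonical.
Variable K : fieldType.

Definition Pol := {mpoly K[7]}.
(* Ambient field of rational functions; the Laurent polynomial algebra
   (in a..e, with coefficients polynomial in G1,G2) is the subring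
   described by [is_laurent] below. *)
Definition Frac := {fraction Pol}.

Definition var (k : nat) : Frac := tofrac ('X_(inord k) : Pol).
Definition va := var 0.
Definition vb := var 1.
Definition vc := var 2.
Definition vd := var 3.
Definition ve := var 4.
Definition vG1 := var 5.
Definition vG2 := var 6.

Definition cst (x : K) : Frac := tofrac (x%:MP : Pol).

Definition is_laurent (f : Frac) : Prop :=
  exists (p : Pol) (m : nat), f = tofrac p / (va * vb * vc * vd * ve) ^+ m.

Definition fderiv (i : 'I_7) (f : Frac) : Frac :=
  let r := repr f in
  let n := (frac r).1 in let q := (frac r).2 in
  tofrac (mderiv i n * q - n * mderiv i q) / tofrac (q ^+ 2).

(* Upper-triangular part of the log-canonical coefficient matrix:
   {x_i, x_j} = w_ij x_i x_j. *)
Definition wU (i j : nat) : K :=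
  match i, j with
  | 0, 1 => 1
  | 0, 3 => - 2%:R^-1
  | 0, 4 => 2%:R^-1
  | 1, 3 => - 2%:R^-1
  | 1, 4 => 2%:R^-1
  | 2, 3 => - 2%:R^-1
  | 2, 4 => 2%:R^-1
  | _, _ => 0
  end.
Definition w (i j : 'I_7) : K := wU i j - wU j i.

(* The log-canonical bracket, i.e. the unique extension by bilinearity,
   antisymmetry and the Leibniz rule of the values on generators:
   {f,g} = sum_{i,j} w_ij x_i x_j (d_i f) (d_j g). *)
Definition pb (f g : Frac) : Frac :=
  \sum_(i < 7) \sum_(j < 7)
     cst (w i j) * tofrac ('X_i : Pol) * tofrac ('X_j : Pol)
       * fderiv i f * fderiv j g.

Definition casimir (x : Frac) : Prop :=
  is_laurent x /\ forall f, is_laurent f -> pb x f = 0.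

(* Poisson bivector matrix ({x_i, x_j})_{i,j}; its rank over the field of
   rational functions is the rank at a generic point, i.e. the dimension
   of the generic symplectic leaves. *)
Definition pb_matrix : 'M[Frac]_7 :=
  \matrix_(i < 7, j < 7) pb (tofrac ('X_i : Pol)) (tofrac ('X_j : Pol)).

Definition x1 : Frac := - ve * va / vc - vd * vb / vc.
Definition x2 : Frac :=
  - ve * vb / vc - vG1 * vd * vb / va - vd * vb ^+ 2 / (va * vc) - vd * vc / va.
Definition x3 : Frac :=
  - vG2 * vc / vb - vG1 * vc / va - vb / va - vc ^+ 2 / (va * vb) - va / vb.

Definition cubicPV : Frac :=
  let G3 := ve in let Gi := vd in
  x1 * x2 * x3 + x1 ^+ 2 + x2 ^+ 2
  - (vG1 * Gi + vG2 * G3) * x1 - (vG2 * Gi + vG1 * G3) * x2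
  - G3 * Gi * x3 + Gi ^+ 2 + G3 ^+ 2 + vG1 * vG2 * G3 * Gi.

End LogCanonical.

(* Main.v *)
Require Import Defs.
From HB Require Import structures.
From mathcomp Require Import all_boot all_order all_algebra.
From mathcomp Require Import fraction generic_quotient.
From mathcomp.multinomials Require Import mpoly.
From mathcomp Require Import ring.
Import GRing.Theory.
Local Open Scope ring_scope.

Section Abs.
Variables (F : fieldType) (h : F) (v : nat -> F) (D : nat -> F -> F) (W : nat -> nat -> F).

Definition wUF (i j : nat) : F :=
  match i, j with
  | 0, 1 => 1
  | 0, 3 => - h
  | 0, 4 => h
  | 1, 3 => - h
  | 1, 4 => h
  | 2, 3 => - h
  | 2, 4 => h
  | _, _ => 0
  end.
Definition wF i j := wUF i j - wUF j i.

Hypothesis hW : forall i j, W i j = wF i j.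
Hypothesis Dv : forall i k, (i < 7)%N -> (k < 7)%N -> D i (v k) = (i == k)%:R.

Definition PB f g := \sum_(0 <= i < 7) \sum_(0 <= j < 7) W i j * v i * v j * D i f * D j g.

Lemma PB_expand f g : PB f g =
  \sum_(0 <= i < 7) \sum_(0 <= j < 7) W i j * v i * v j * D i f * D j g.
Proof. by []. Qed.

Ltac expand := rewrite /PB !big_nat_recl // !big_geq //.

Lemma cas5 f : PB (v 5) f = 0.
Proof. expand. rewrite !Dv //= !hW /wF /wUF. ring. Qed.
Lemma cas6 f : PB (v 6) f = 0.
Proof. expand. rewrite !Dv //= !hW /wF /wUF. ring. Qed.
Hypothesis DD : forall i x y, D i (x + y) = D i x + D i y.
Hypothesis DN : forall i x, D i (- x) = - D i x.
Hypothesis DM : forall i x y, D i (x * y) = D i x * y + x * D i y.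
Hypothesis DV : forall i x, D i (x^-1) = - D i x / x ^+ 2.

Lemma casde f : PB (v 3 * v 4) f = 0.
Proof. expand. rewrite !DM !Dv //= !hW /wF /wUF. ring. Qed.

Hypothesis hv : forall k, (k < 7)%N -> v k != 0.
Hypothesis hh : h * 2%:R = 1.

Lemma h_half : h = 2%:R^-1 /\ (2%:R : F) != 0.
Proof.
have h2 : (2%:R : F) != 0 by apply/eqP => e; move: hh; rewrite e mulr0 => /eqP; rewrite eq_sym oner_eq0.
by split => //; apply: (mulIf h2); rewrite hh mulVf.
Qed.

Lemma px1 : PB (- v 4 * v 0 / v 2 - v 3 * v 1 / v 2) (v 4) = 0.
Proof.
have [eh h2] := h_half.
have h0 := hv 0 isT; have h1 := hv 1 isT; have h2' := hv 2 isT.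
expand. rewrite !(DD, DN, DM, DV) !Dv //= !hW /wF /wUF eh.
field; by rewrite ?hv ?h2.
Qed.


Lemma px2 : PB (- v 4 * v 1 / v 2 - v 5 * v 3 * v 1 / v 0 - v 3 * v 1 ^+ 2 / (v 0 * v 2) - v 3 * v 2 / v 0) (v 4) = 0.
Proof.
have [eh h2] := h_half.
expand. rewrite !Dv //= ?mulr0n ?mulr1n ?mulr0 ?mulr1 ?addr0 ?add0r. rewrite !expr2 !(DD, DN, DM, DV). rewrite !Dv //=. rewrite !hW /wF /wUF eh.
field; by rewrite ?hv ?h2.
Qed.

Lemma px3 : PB (- v 6 * v 2 / v 1 - v 5 * v 2 / v 0 - v 1 / v 0 - v 2 ^+ 2 / (v 0 * v 1) - v 0 / v 1) (v 4) = 0.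
Proof.
have [eh h2] := h_half.
expand. rewrite !Dv //= ?mulr0n ?mulr1n ?mulr0 ?mulr1 ?addr0 ?add0r. rewrite !expr2 !(DD, DN, DM, DV). rewrite !Dv //=. rewrite !hW /wF /wUF eh.
field; by rewrite ?hv ?h2.
Qed.

Lemma cubic_abs :
  let x1 := - v 4 * v 0 / v 2 - v 3 * v 1 / v 2 in
  let x2 := - v 4 * v 1 / v 2 - v 5 * v 3 * v 1 / v 0 - v 3 * v 1 ^+ 2 / (v 0 * v 2) - v 3 * v 2 / v 0 in
  let x3 := - v 6 * v 2 / v 1 - v 5 * v 2 / v 0 - v 1 / v 0 - v 2 ^+ 2 / (v 0 * v 1) - v 0 / v 1 in
  let G3 := v 4 in let Gi := v 3 in
  x1 * x2 * x3 + x1 ^+ 2 + x2 ^+ 2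
  - (v 5 * Gi + v 6 * G3) * x1 - (v 6 * Gi + v 5 * G3) * x2
  - G3 * Gi * x3 + Gi ^+ 2 + G3 ^+ 2 + v 5 * v 6 * G3 * Gi = 0.
Proof.
move=> /=. field; by rewrite ?hv.
Qed.

Lemma sum_delta (G : nat -> F) i : (i < 7)%N -> \sum_(0 <= k < 7) G k * (k == i)%:R = G i.
Proof.
move=> hi; rewrite (bigD1_seq i) ?mem_index_iota ?iota_uniq //= eqxx mulr1 big1 ?addr0 //.
by move=> k /negPf ->; rewrite mulr0.
Qed.

Lemma PBvv i j : (i < 7)%N -> (j < 7)%N -> PB (v i) (v j) = W i j * v i * v j.
Proof.
move=> hi hj; rewrite /PB.
transitivity (\sum_(0<=k<7) (\sum_(0<=l<7) (W k l * v k * v l * D l (v j))) * (k == i)%:R).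
  apply: eq_big_nat => k /andP [_ hk]; rewrite mulr_suml; apply: eq_big_nat => l hl.
  by rewrite (Dv k i hk hi) mulrAC.
rewrite sum_delta //.
transitivity (\sum_(0<=l<7) (W i l * v i * v l) * (l == j)%:R).
  apply: eq_big_nat => l /andP [_ hl]; by rewrite (Dv l j hl hj).
by rewrite sum_delta.
Qed.
End Abs.

Section Rk.
Variables (F : fieldType) (h : F) (W : nat -> nat -> F).
Hypothesis hW : forall i j, W i j = @wF F h i j.
Hypothesis hh : h * 2%:R = 1.

Definition W0 : 'M[F]_7 := \matrix_(i < 7, j < 7) W i j.
Definition Pm : 'M[F]_(7,4) := \matrix_(i < 7, k < 4) W i k.
Definition qF (k j : nat) : F := if (j < 4)%N then (k == j)%:R else if j == 4 then - (k == 3)%:R else 0.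
Definition Qm : 'M[F]_(4,7) := \matrix_(k < 4, j < 7) qF k j.


Lemma W0PQ : W0 = Pm *m Qm.
Proof.
apply/matrixP => i j; rewrite !mxE !big_ord_recr big_ord0 /= !mxE.
case: i => [[|[|[|[|[|[|[|i]]]]]]] Hi] //=; case: j => [[|[|[|[|[|[|[|j]]]]]]] Hj] //=; rewrite /qF /= !hW /wF /wUF; ring.
Qed.

Definition Sm : 'M[F]_(7,4) := \matrix_(j < 7, l < 4) ((j : nat) == l)%:R.
Definition rF (k i : nat) : F :=
  match k, i with
  | 0, 1 => -1 | 0, 2 => 1 | 1, 0 => 1 | 1, 2 => -1
  | 2, 0 => -1 | 2, 1 => 1 | 2, 3 => 2%:R | 3, 2 => - 2%:R
  | _, _ => 0 end.
Definition Rm : 'M[F]_(4,7) := \matrix_(k < 4, i < 7) rF k i.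

Lemma W0S : W0 *m Sm = Pm.
Proof.
apply/matrixP => i j; rewrite !mxE !big_ord_recr big_ord0 /= !mxE.
case: i => [[|[|[|[|[|[|[|i]]]]]]] Hi] //=; case: j => [[|[|[|[|j]]]] Hj] //=; ring.
Qed.

Lemma RP : Rm *m Pm = 1%:M.
Proof.
have h2 : (2%:R : F) != 0 by apply/eqP => e; move: hh; rewrite e mulr0 => /eqP; rewrite eq_sym oner_eq0.
have eh : h = 2%:R^-1 by apply: (mulIf h2); rewrite hh mulVf.
apply/matrixP => i j; rewrite !mxE !big_ord_recr big_ord0 /= !mxE.
case: i => [[|[|[|[|i]]]] Hi] //=; case: j => [[|[|[|[|j]]]] Hj] //=;
  rewrite /rF /= !hW /wF /wUF /= ?eh; field; by rewrite ?h2.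
Qed.

Lemma rankW0 : \rank W0 = 4%N.
Proof.
apply/eqP; rewrite eqn_leq; apply/andP; split.
  by rewrite W0PQ (leq_trans (mxrankM_maxl _ _)) // rank_leq_col.
rewrite -{1}(mxrank1 F 4) -RP -W0S.
exact: leq_trans (mxrankM_maxr _ _) (mxrankM_maxl _ _).
Qed.
End Rk.

Section Rk2.
Variables (F : fieldType) (h : F) (v : nat -> F) (D : nat -> F -> F) (W : nat -> nat -> F).
Hypothesis hW : forall i j, W i j = @wF F h i j.
Hypothesis Dv : forall i k, (i < 7)%N -> (k < 7)%N -> D i (v k) = (i == k)%:R.
Hypothesis hv : forall k, (k < 7)%N -> v k != 0.
Hypothesis hh : h * 2%:R = 1.

Lemma rankM : \rank (\matrix_(i < 7, j < 7) @PB F v D W (v i) (v j)) = 4%N.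
Proof.
have -> : \matrix_(i < 7, j < 7) @PB F v D W (v i) (v j) = \matrix_(i < 7, j < 7) (W i j * v i * v j).
  by apply/matrixP => i j; rewrite !mxE (@PBvv F v D W Dv).
set M := \matrix_(i < 7, j < 7) _.
have E2 : M = diag_mx (\row_(i < 7) v i) *m @W0 F W *m diag_mx (\row_(i < 7) v i).
  rewrite mul_diag_mx mul_mx_diag; apply/matrixP => i j; rewrite !mxE; ring.
have E3 : @W0 F W = diag_mx (\row_(i < 7) (v i)^-1) *m M *m diag_mx (\row_(i < 7) (v i)^-1).
  rewrite mul_diag_mx mul_mx_diag; apply/matrixP => i j; rewrite !mxE.
  have := hv _ (ltn_ord i); have := hv _ (ltn_ord j); move=> a b; field; by rewrite a b.
have r := @rankW0 F h W hW hh.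
apply/eqP; rewrite eqn_leq; apply/andP; split.
  rewrite E2; apply: (leq_trans (mxrankM_maxl _ _)); apply: (leq_trans (mxrankM_maxr _ _)); by rewrite r.
apply: (@leq_trans (\rank (@W0 F W))); first by rewrite r.
rewrite E3; exact: leq_trans (mxrankM_maxl _ _) (mxrankM_maxr _ _).
Qed.
End Rk2.

Section S.
Variable K : fieldType.
Local Notation Pol := (Pol K).
Local Notation Frac := (Frac K).

Lemma frac_repr (f : Frac) :
  f = tofrac (frac (repr f)).1 / tofrac (frac (repr f)).2.
Proof.
have dn0 : tofrac (frac (repr f)).2 != 0 by rewrite tofrac_eq0 denom_ratioP.
apply: (canRL (mulfK dn0)).
rewrite -[f in LHS]reprK; set x := repr f.
unlock tofrac.
rewrite /GRing.mul /= -FracField.pi_mul. apply/eqP. rewrite piE.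
rewrite reprK equivfE /FracField.mulf !numden_Ratio ?oner_eq0 ?mulf_neq0 ?denom_ratioP //.
all: try exact: oner_neq0.
by rewrite !mulr1 mulrC.
Qed.

Lemma tofrac_neq0 {q : Pol} : q != 0 -> tofrac q != 0 :> Frac.
Proof. by rewrite tofrac_eq0. Qed.

Lemma alg_cross {F : fieldType} {N Q N' Q' : F} : Q != 0 -> Q' != 0 ->
  N / Q = N' / Q' -> N' * Q = N * Q'.
Proof. move=> Q0 Q'0 E; rewrite -(divfK Q'0 N') -E; field; by rewrite Q0. Qed.

Lemma alg_key {F : fieldType} {N Q N' Q' DN DQ DN' DQ' : F} : Q != 0 -> Q' != 0 ->
  N / Q = N' / Q' -> DN' * Q + N' * DQ = DN * Q' + N * DQ' ->
  (DN' * Q' - N' * DQ') / Q' ^+ 2 = (DN * Q - N * DQ) / Q ^+ 2.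
Proof.
move=> Q0 Q'0 E E2.
have E1 := alg_cross Q0 Q'0 E.
have eN' : N' = N * Q' / Q by rewrite -E1 mulfK.
have eDN' : DN' = (DN * Q' + N * DQ' - N' * DQ) / Q by rewrite -E2 addrK mulfK.
rewrite eDN' eN'; field; by rewrite Q0 Q'0.
Qed.

Lemma fderiv_frac i (n q : Pol) : q != 0 ->
  fderiv i (tofrac n / tofrac q) =
  (tofrac (mderiv i n) * tofrac q - tofrac n * tofrac (mderiv i q)) / tofrac q ^+ 2.
Proof.
move=> q0; set f := _ / _.
rewrite /fderiv; set n' := (frac (repr f)).1; set q' := (frac (repr f)).2.
have q'0 : q' != 0 := denom_ratioP _.
have Q0 := tofrac_neq0 q0; have Q'0 := tofrac_neq0 q'0.
have Ef : tofrac n / tofrac q = tofrac n' / tofrac q' :> Frac := frac_repr f.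
have E2 : tofrac (mderiv i n') * tofrac q + tofrac n' * tofrac (mderiv i q)
   = tofrac (mderiv i n) * tofrac q' + tofrac n * tofrac (mderiv i q') :> Frac.
  have : n' * q = n * q' by apply/eqP; rewrite -tofrac_eq !tofracM (alg_cross Q0 Q'0 Ef).
  by move/(congr1 (mderiv i)); rewrite !mderivM => /(congr1 (@tofrac _)); rewrite !tofracD !tofracM.
rewrite tofracB !tofracM -expr2.
exact: alg_key Q0 Q'0 Ef E2.
Qed.

Ltac gen_tofrac := repeat match goal with |- context [@tofrac ?R ?x] =>
  let X := fresh "X" in set (X := @tofrac R x) in *; clearbody X end.

Lemma frac_ex (f : Frac) : exists n q, q != 0 /\ f = tofrac n / tofrac q.
Proof. exists (frac (repr f)).1, (frac (repr f)).2; split; [exact: denom_ratioP | exact: frac_repr]. Qed.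

Lemma pureD {F : fieldType} {N1 Q1 N2 Q2 DN1 DQ1 DN2 DQ2 : F} : Q1 != 0 -> Q2 != 0 ->
 ((DN1*Q2 + N1*DQ2 + (DN2*Q1 + N2*DQ1)) * (Q1*Q2) - (N1*Q2 + N2*Q1)*(DQ1*Q2 + Q1*DQ2)) / (Q1*Q2)^+2
 = (DN1*Q1 - N1*DQ1)/Q1^+2 + (DN2*Q2 - N2*DQ2)/Q2^+2.
Proof. move=> h1 h2; field; by rewrite h1 h2. Qed.

Lemma fderivD i (f g : Frac) : fderiv i (f + g) = fderiv i f + fderiv i g.
Proof.
have [n1 [q1 [q10 ->]]] := frac_ex f. have [n2 [q2 [q20 ->]]] := frac_ex g.
have Q1 := tofrac_neq0 q10. have Q2 := tofrac_neq0 q20.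
rewrite (addf_div _ _ Q1 Q2).
rewrite -(tofracM n1 q2) -(tofracM n2 q1) -tofracD -(tofracM q1 q2).
rewrite (fderiv_frac i _ _ (mulf_neq0 q10 q20)) (fderiv_frac i _ _ q10) (fderiv_frac i _ _ q20).
rewrite !mderivD !mderivM.
rewrite !tofracD !tofracM.
exact: (pureD Q1 Q2).
Qed.

Lemma pureM {F : fieldType} {N1 Q1 N2 Q2 DN1 DQ1 DN2 DQ2 : F} : Q1 != 0 -> Q2 != 0 ->
 ((DN1*N2 + N1*DN2)*(Q1*Q2) - N1*N2*(DQ1*Q2 + Q1*DQ2))/(Q1*Q2)^+2
 = (DN1*Q1 - N1*DQ1)/Q1^+2 * (N2/Q2) + N1/Q1 * ((DN2*Q2 - N2*DQ2)/Q2^+2).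
Proof. move=> h1 h2; field; by rewrite h1 h2. Qed.

Lemma fderivM i (f g : Frac) : fderiv i (f * g) = fderiv i f * g + f * fderiv i g.
Proof.
have [n1 [q1 [q10 ->]]] := frac_ex f; have [n2 [q2 [q20 ->]]] := frac_ex g.
have Q1 := tofrac_neq0 q10; have Q2 := tofrac_neq0 q20.
rewrite (mulf_div (tofrac n1) (tofrac q1) (tofrac n2) (tofrac q2)).
rewrite -(tofracM n1 n2) -(tofracM q1 q2).
rewrite (fderiv_frac i _ _ (mulf_neq0 q10 q20)) (fderiv_frac i _ _ q10) (fderiv_frac i _ _ q20).
rewrite !mderivM !tofracD !tofracM.
exact: (pureM Q1 Q2).
Qed.

Lemma fderiv0 i : fderiv i (0 : Frac) = 0.
Proof.
have e : (0 : Frac) = tofrac 0 / tofrac 1 by rewrite tofrac0 mul0r.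
rewrite e (fderiv_frac i _ _ (oner_neq0 _)) mderiv0 !tofrac0.
by rewrite !mul0r subrr mul0r.
Qed.

Lemma fderivN i (f : Frac) : fderiv i (- f) = - fderiv i f.
Proof. by apply/eqP; rewrite -addr_eq0 addrC -fderivD addrN fderiv0. Qed.

Lemma pureV {F : fieldType} {N Q DN DQ : F} : N != 0 -> Q != 0 ->
  (DQ * N - Q * DN) / N ^+ 2 = - ((DN * Q - N * DQ) / Q ^+ 2) / (N / Q) ^+ 2.
Proof. move=> h1 h2; field; by rewrite h1 h2. Qed.

Lemma fderivV i (f : Frac) : fderiv i (f^-1) = - fderiv i f / f ^+ 2.
Proof.
have [->|f0] := eqVneq f 0.
  by rewrite invr0 fderiv0 oppr0 mul0r.
have [n [q [q0 ef]]] := frac_ex f.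
have n0 : n != 0.
  by apply/eqP => e; move: f0; rewrite ef e tofrac0 mul0r eqxx.
have Q := tofrac_neq0 q0; have N := tofrac_neq0 n0.
rewrite ef (invf_div (tofrac n) (tofrac q)).
rewrite (fderiv_frac i _ _ n0) (fderiv_frac i _ _ q0).
exact: (pureV N Q).
Qed.

Lemma mderivXX (a b : 'I_7) : mderiv a ('X_b : Pol) = ((b == a)%:R : Pol).
Proof.
rewrite mderivX mnm1E scaler_nat; case: eqP => [->|_] /=.
  have -> : (U_(a) - U_(a))%MM = 0%MM by apply/mnmP => l; rewrite mnmBE mnm0E subnn.
  by rewrite mpolyX0.
by [].
Qed.

Lemma fderiv_var (i k : nat) : (i < 7)%N -> (k < 7)%N ->
  fderiv (inord i) (var K k) = ((i == k)%:R : Frac).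
Proof.
move=> hi hk.
have e : var K k = tofrac ('X_(inord k) : Pol) / tofrac 1 by rewrite tofrac1 divr1.
rewrite e (fderiv_frac _ _ _ (oner_neq0 _)).
have m1 : mderiv (inord i) (1 : Pol) = 0 by rewrite -mpolyC1 mderivC.
rewrite m1 tofrac0 mulr0 subr0 tofrac1 mulr1 expr1n divr1 mderivXX rmorph_nat.
by congr (_ %:R); rewrite -(inj_eq val_inj) /= !inordK // eq_sym.
Qed.

Lemma var_neq0 k : (k < 7)%N -> var K k != 0 :> Frac.
Proof.
move=> hk; rewrite /var tofrac_eq0; apply/eqP => e.
have := mderivXX (inord k) (inord k); rewrite e mderiv0 eqxx /= => /eqP.
by rewrite eq_sym oner_eq0.
Qed.

Lemma cstB (x y : K) : cst (x - y) = cst x - cst y.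
Proof. by rewrite /cst mpolyCB tofracB. Qed.
Lemma cst0 : cst (0 : K) = 0.
Proof. by rewrite /cst mpolyC0 tofrac0. Qed.
Lemma cst1 : cst (1 : K) = 1.
Proof. by rewrite /cst mpolyC1 tofrac1. Qed.
Lemma cstN (x : K) : cst (- x) = - cst x.
Proof. by rewrite /cst mpolyCN tofracN. Qed.
Lemma cstM (x y : K) : cst (x * y) = cst x * cst y.
Proof. by rewrite /cst mpolyCM tofracM. Qed.
Lemma cst_nat n : cst (n%:R : K) = n%:R.
Proof. by rewrite /cst mpolyC_nat rmorph_nat. Qed.

Lemma cst_wU i j : cst (wU K i j) = wUF _ (cst (2%:R^-1 : K)) i j.
Proof. by case: i => [|[|[|i]]]; case: j => [|[|[|[|[|j]]]]] /=; rewrite ?cst0 ?cst1 ?cstN. Qed.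

Lemma hW_inst i j : cst (wU K i j - wU K j i) = wF _ (cst (2%:R^-1 : K)) i j.
Proof. by rewrite cstB !cst_wU. Qed.

Lemma hh_inst : (2%:R : K) != 0 -> cst (2%:R^-1 : K) * 2%:R = 1.
Proof. by move=> h2; rewrite -cst_nat -cstM mulVf // cst1. Qed.

Lemma pb_nat f g : pb f g =
  PB _ (var K) (fun i => fderiv (inord i)) (fun i j => cst (wU K i j - wU K j i)) f g.
Proof.
rewrite /pb /PB big_mkord; apply: eq_bigr => i _; rewrite big_mkord; apply: eq_bigr => j _.
by rewrite /var !inord_val.
Qed.
End S.

Theorem mainTheorem2 (K : fieldType) (h2 : (2%:R : K) != 0) :
  [/\ [/\ casimir (vG1 K), casimir (vG2 K) & casimir (vd K * ve K)],
      \rank (pb_matrix K) = 4%N,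
      [/\ pb (x1 K) (ve K) = 0, pb (x2 K) (ve K) = 0 & pb (x3 K) (ve K) = 0]
    & cubicPV K = 0].
Proof.
have hW := @hW_inst K.
have hh := @hh_inst K h2.
have Dv := @fderiv_var K.
have DD : forall i x y, fderiv (inord i) (x + y) = fderiv (inord i) x + fderiv (inord i) y :> Frac K
  by move=> i; exact: fderivD.
have DN : forall i x, fderiv (inord i) (- x) = - fderiv (inord i) x :> Frac K
  by move=> i; exact: fderivN.
have DM : forall i x y, fderiv (inord i) (x * y) = fderiv (inord i) x * y + x * fderiv (inord i) y :> Frac K
  by move=> i; exact: fderivM.
have DV : forall i x, fderiv (inord i) (x^-1) = - fderiv (inord i) x / x ^+ 2 :> Frac K
  by move=> i; exact: fderivV.
have hv := @var_neq0 K.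
split.
- split; split.
  + by exists ('X_(inord 5)), 0%N; rewrite expr0 divr1.
  + by move=> f _; rewrite pb_nat; exact: (@cas5 _ _ _ _ _ hW Dv).
  + by exists ('X_(inord 6)), 0%N; rewrite expr0 divr1.
  + by move=> f _; rewrite pb_nat; exact: (@cas6 _ _ _ _ _ hW Dv).
  + by exists ('X_(inord 3) * 'X_(inord 4)), 0%N; rewrite expr0 divr1 tofracM.
  + by move=> f _; rewrite pb_nat; exact: (@casde _ _ _ _ _ hW Dv DM).
- have -> : pb_matrix K = \matrix_(i < 7, j < 7)
     PB _ (var K) (fun i => fderiv (inord i)) (fun i j => cst (wU K i j - wU K j i)) (var K i) (var K j).
    by apply/matrixP => i j; rewrite !mxE pb_nat /var !inord_val.
  exact: (@rankM _ _ _ _ _ hW Dv hv hh).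
- split; rewrite pb_nat.
  + exact: (@px1 _ _ _ _ _ hW Dv DD DN DM DV hv hh).
  + exact: (@px2 _ _ _ _ _ hW Dv DD DN DM DV hv hh).
  + exact: (@px3 _ _ _ _ _ hW Dv DD DN DM DV hv hh).
- exact: (@cubic_abs _ _ hv).
Qed.
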